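(* Let $X_f,Y_f,Z_f\subset\mathbb{R}$, $D_f=X_f\times Y_f\times Z_f$, and let $f:D_f\to\mathbb{R}$ be a bounded function. (i) If $\mathrm{F\text{-}rank}[f]=(r_1,r_2,r_3)$ (with $r_1,r_2,r_3$ finite), then there exist a tensor $\mathcal{C}\in\mathbb{R}^{r_1\times r_2\times r_3}$ and bounded functions $f_x:X_f\to\mathbb{R}^{r_1}$, $f_y:Y_f\to\mathbb{R}^{r_2}$, $f_z:Z_f\to\mathbb{R}^{r_3}$ such that for all $(v_1,v_2,v_3)\in D_f$, $f(v_1,v_2,v_3)=\mathcal{C}\times_1 f_x(v_1)\times_2 f_y(v_2)\times_3 f_z(v_3)$. (ii) Conversely, let $\mathcal{C}\in\mathbb{R}^{r_1\times r_2\times r_3}$ be an arbitrary tensor, let $X_g,Y_g,Z_g\subset\mathbb{R}$, and let $g_x:X_g\to\mathbb{R}^{r_1}$, $g_y:Y_g\to\mathbb{R}^{r_2}$, $g_z:Z_g\to\mathbb{R}^{r_3}$ be arbitrary bounded functions. Define $g:X_g\times Y_g\times Z_g\to\mathbb{R}$ by $g(v_1,v_2,v_3)=\mathcal{C}\times_1 g_x(v_1)\times_2 g_y(v_2)\times_3 g_z(v_3)$. Then $(\mathrm{F\text{-}rank}[g])_{(i)}\le r_i$ for $i=1,2,3$.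
   Context: For $\mathcal{C}\in\mathbb{R}^{r_1\times r_2\times r_3}$ and vectors $\mathbf{a}\in\mathbb{R}^{r_1},\mathbf{b}\in\mathbb{R}^{r_2},\mathbf{c}\in\mathbb{R}^{r_3}$ (viewed as $1\times r_i$ matrices in the mode-$i$ products $\mathcal{X}\times_i\mathbf{A}:=\mathrm{fold}_i(\mathbf{A}\mathbf{X}^{(i)})$), one has $\mathcal{C}\times_1\mathbf{a}\times_2\mathbf{b}\times_3\mathbf{c}=\sum_{i,j,k}\mathcal{C}_{(i,j,k)}\mathbf{a}_{(i)}\mathbf{b}_{(j)}\mathbf{c}_{(k)}$. For a tensor $\mathcal{T}\in\mathbb{R}^{n_1\times n_2\times n_3}$, $\mathbf{T}^{(i)}$ denotes its mode-$i$ unfolding matrix (columns are the mode-$i$ fibers). For a function $h:X\times Y\times Z\to\mathbb{R}$ with $X,Y,Z\subset\mathbb{R}$, the sampled tensor set is $S[h]=\{\mathcal{T}\in\mathbb{R}^{n_1\times n_2\times n_3}: n_1,n_2,n_3\in\mathbb{N}_+,\ \exists\,\mathbf{x}\in X^{n_1},\mathbf{y}\in Y^{n_2},\mathbf{z}\in Z^{n_3}\text{ with }\mathcal{T}_{(i,j,k)}=h(\mathbf{x}_{(i)},\mathbf{y}_{(j)},\mathbf{z}_{(k)})\ \forall i,j,k\}$, and the function rank is $\mathrm{F\text{-}rank}[h]=(r_1,r_2,r_3)$ with $r_i=\sup_{\mathcal{T}\in S[h]}\mathrm{rank}(\mathbf{T}^{(i)})$; $(\mathrm{F\text{-}rank}[h])_{(i)}$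 denotes its $i$-th entry. *)

(* Defs.v *)
From HB Require Import structures.
From mathcomp Require Import all_boot all_order all_algebra.
From mathcomp Require Import classical_sets reals.
Set Implicit Arguments. Unset Strict Implicit. Unset Printing Implicit Defensive.
Import Order.TTheory GRing.Theory Num.Theory.
Local Open Scope ring_scope.

Definition tensor (R : Type) (n1 n2 n3 : nat) := 'I_n1 -> 'I_n2 -> 'I_n3 -> R.

(* Mode-i unfoldings: row index is the mode-i index, each row lists (via
   mxvec) all entries with that mode-i index; columns are the mode-i fibers
   (in some fixed order, which does not affect the rank). *)
Definition unfold1 (R : Type) n1 n2 n3 (T : tensor R n1 n2 n3) : 'M[R]_(n1, n2 * n3) :=
  \matrix_(i < n1) mxvec (\matrix_(j < n2, k < n3) T i j k).
Definition unfold2 (R : Type) n1 n2 n3 (T : tensor R n1 n2 n3) : 'M[R]_(n2, n1 * n3) :=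
  \matrix_(j < n2) mxvec (\matrix_(i < n1, k < n3) T i j k).
Definition unfold3 (R : Type) n1 n2 n3 (T : tensor R n1 n2 n3) : 'M[R]_(n3, n1 * n2) :=
  \matrix_(k < n3) mxvec (\matrix_(i < n1, j < n2) T i j k).

(* rank of the mode-m unfolding (m = 1,2,3; any other m is treated as 3) *)
Definition mode_rank (R : fieldType) (m : nat) n1 n2 n3 (T : tensor R n1 n2 n3) : nat :=
  match m with
  | 1%N => \rank (unfold1 T)
  | 2%N => \rank (unfold2 T)
  | _ => \rank (unfold3 T)
  end.

(* C x_1 a x_2 b x_3 c = sum_{i,j,k} C(i,j,k) a(i) b(j) c(k) *)
Definition ttm3 (R : comNzRingType) r1 r2 r3 (C : tensor R r1 r2 r3)
  (a : 'rV[R]_r1) (b : 'rV[R]_r2) (c : 'rV[R]_r3) : R :=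
  \sum_(i < r1) \sum_(j < r2) \sum_(k < r3) C i j k * a 0 i * b 0 j * c 0 k.

Definition sampled (R : Type) (h : R -> R -> R -> R) (X Y Z : set R)
  n1 n2 n3 (T : tensor R n1 n2 n3) : Prop :=
  [/\ (0 < n1)%N, (0 < n2)%N, (0 < n3)%N &
   exists (x : 'I_n1 -> R) (y : 'I_n2 -> R) (z : 'I_n3 -> R),
     [/\ forall i, X (x i), forall j, Y (y j), forall k, Z (z k) &
         forall i j k, T i j k = h (x i) (y j) (z k)]].

Definition Frank_le (R : fieldType) (h : R -> R -> R -> R) (X Y Z : set R)
  (m : nat) (r : nat) : Prop :=
  forall n1 n2 n3 (T : tensor R n1 n2 n3), sampled h X Y Z T -> (mode_rank m T <= r)%N.

(* (F-rank[h])_m = r : r is the supremum (in nat, sup of empty set = 0) of the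
   mode-m ranks of the tensors of S[h]. *)
Definition Frank_mode (R : fieldType) (h : R -> R -> R -> R) (X Y Z : set R)
  (m : nat) (r : nat) : Prop :=
  Frank_le h X Y Z m r /\ forall b, Frank_le h X Y Z m b -> (r <= b)%N.

Definition Frank (R : fieldType) (h : R -> R -> R -> R) (X Y Z : set R)
  (r1 r2 r3 : nat) : Prop :=
  [/\ Frank_mode h X Y Z 1 r1, Frank_mode h X Y Z 2 r2 & Frank_mode h X Y Z 3 r3].

Definition bounded3 (R : realType) (h : R -> R -> R -> R) (X Y Z : set R) : Prop :=
  exists M : R, forall v1 v2 v3, X v1 -> Y v2 -> Z v3 -> `|h v1 v2 v3| <= M.

Definition boundedv (R : realType) (r : nat) (g : R -> 'rV[R]_r) (X : set R) : Prop :=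
  exists M : R, forall v, X v -> forall i, `|g v 0 i| <= M.

(* Main.v *)
Require Import Defs.
From HB Require Import structures.
From mathcomp Require Import all_boot all_order all_algebra.
From mathcomp Require Import classical_sets reals.
From mathcomp Require Import ring.
From Stdlib Require Import Classical.
Import Order.TTheory GRing.Theory Num.Theory.
Local Open Scope ring_scope.

Definition Umx {R : Type} {m p q} (G : 'I_m -> 'I_p -> 'I_q -> R) : 'M[R]_(m, p * q) :=
  \matrix_(i < m) mxvec (\matrix_(j < p, k < q) G i j k).

Definition dec {p q} (c : 'I_(p * q)) : 'I_p * 'I_q :=
  enum_val (cast_ord (esym (mxvec_cast p q)) c).

Lemma decE p q (i : 'I_p) (j : 'I_q) : dec (mxvec_index i j) = (i, j).
Proof. by rewrite /dec /mxvec_index cast_ordK enum_rankK. Qed.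

Lemma UmxE (R : Type) m p q (G : 'I_m -> 'I_p -> 'I_q -> R) i j k :
  Umx G i (mxvec_index j k) = G i j k.
Proof. by rewrite /Umx !mxE mxvecE mxE. Qed.

Lemma Umx_dec (R : Type) m p q (G : 'I_m -> 'I_p -> 'I_q -> R) :
  Umx G = \matrix_(i, c) G i (dec c).1 (dec c).2.
Proof.
by apply/matrixP => i c; case/mxvec_indexP: c => j k; rewrite UmxE mxE decE.
Qed.

Lemma Umx_diag (F : fieldType) m p (G : 'I_m -> 'I_p -> 'I_p -> F) :
  (\rank (\matrix_(a, b) G a b b) <= \rank (Umx G))%N.
Proof.
have -> : \matrix_(a, b) G a b b = colsub (fun b => mxvec_index b b) (Umx G).
  by apply/matrixP => a b; rewrite !mxE mxvecE mxE.
rewrite -mxrank_tr trmx_mxsub -[X in (_ <= X)%N]mxrank_tr.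
apply: mxrankS; exact: rowsub_sub.
Qed.

Lemma Umx_fact (F : comNzRingType) m p q n (G : 'I_m -> 'I_p -> 'I_q -> F)
  (L : 'M[F]_(m, n)) (K : 'I_n -> 'I_p -> 'I_q -> F) :
  (forall i j k, G i j k = \sum_a L i a * K a j k) -> Umx G = L *m Umx K.
Proof.
move=> HG; apply/matrixP => i c; case/mxvec_indexP: c => j k.
rewrite UmxE HG mxE; apply: eq_bigr => a _; by rewrite UmxE.
Qed.

Definition pm {R : Type} (h : R -> R * R -> R) {m p} (xs : 'I_m -> R) (cs : 'I_p -> R * R)
  : 'M[R]_(m, p) := \matrix_(a, b) h (xs a) (cs b).

Lemma extract (F : fieldType) m p (A : 'M[F]_(m, p)) r : \rank A = r ->
  exists (fr : 'I_r -> 'I_m) (fc : 'I_r -> 'I_p),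
    \matrix_(a, b) A (fr a) (fc b) \in unitmx.
Proof.
move=> <-; set B := rowsub (maxrankfun A) A.
have rB : row_full B^T.
  by rewrite /row_full mxrank_tr; have := maxrowsub_free A.
exists (maxrankfun A), (fullrankfun rB).
have := fullrowsub_unit rB; rewrite -unitmx_tr.
congr (_ \in unitmx); apply/matrixP => a b; by rewrite !mxE.
Qed.

Lemma schur (F : fieldType) r (G : 'M[F]_r) (u : 'M_(r, 1)) (w : 'M_(1, r)) (d : 'M_1) :
  G \in unitmx -> (\rank (block_mx G u w d) <= r)%N -> d = w *m invmx G *m u.
Proof.
move=> Gu; rewrite /block_mx; set top := row_mx G u; set bot := row_mx w d.
move=> rk.
have rtop : (r <= \rank top)%N.
  apply: leq_trans (mxrankM_maxl top (col_mx 1%:M 0 : 'M_(r + 1, r))).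
  by rewrite /top mul_row_col mulmx1 mulmx0 addr0 mxrank_unit.
have sub : (top <= col_mx top bot)%MS by rewrite -addsmxE addsmxSl.
have Nsub : (col_mx top bot <= top)%MS.
  by rewrite -(mxrank_leqif_sup sub).2 eqn_leq mxrankS // (leq_trans rk rtop).
have /submxP [D hD] : (bot <= top)%MS by move: Nsub; rewrite col_mx_sub => /andP [].
move: hD; rewrite /top /bot mul_mx_row => /eq_row_mx [-> ->].
by rewrite mulmxK.
Qed.

Lemma split_l m n (a : 'I_m) : split (lshift n a) = inl a.
Proof. exact: (unsplitK (inl a)). Qed.
Lemma split_r m n (a : 'I_n) : split (rshift m a) = inr a.
Proof. exact: (unsplitK (inr a)). Qed.

Lemma Lspan (R : realType) (h : R -> R * R -> R) (P : set R) (Q : set (R * R)) (r : nat) :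
  (exists M, forall v c, P v -> Q c -> `|h v c| <= M) ->
  (forall m p (xs : 'I_m -> R) (cs : 'I_p -> R * R),
     (forall a, P (xs a)) -> (forall b, Q (cs b)) -> (\rank (pm h xs cs) <= r)%N) ->
  (exists m p (xs : 'I_m -> R) (cs : 'I_p -> R * R),
     [/\ (forall a, P (xs a)), (forall b, Q (cs b)) & (r <= \rank (pm h xs cs))%N]) ->
  exists (xs : 'I_r -> R) (al : R -> 'rV[R]_r),
    [/\ forall a, P (xs a), boundedv al P &
        forall v c, P v -> Q c -> h v c = \sum_a al v 0 a * h (xs a) c].
Proof.
move=> [M hM] H1 [m [p [xs [cs [Pxs Qcs rle]]]]].
have rk : \rank (pm h xs cs) = r by apply/eqP; rewrite eqn_leq H1 // rle.
have [fr [fc Gu]] := @extract _ _ _ _ _ rk.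
set G := \matrix_(a, b) pm h xs cs (fr a) (fc b) in Gu.
exists (xs \o fr), (fun v => \row_b h v (cs (fc b)) *m invmx G); split.
- by move=> a; apply: Pxs.
- exists (\sum_b \sum_a `|M| * `|invmx G b a|) => v Pv a.
  rewrite mxE; apply: le_trans (ler_norm_sum _ _ _) _.
  apply: ler_sum => b _; rewrite mxE normrM.
  apply: (@le_trans _ _ (`|M| * `|invmx G b a|)).
    apply: ler_wpM2r; first exact: normr_ge0.
    exact: le_trans (hM _ _ Pv (Qcs _)) (ler_norm M).
  rewrite (bigD1 a) //= lerDl; apply: sumr_ge0 => i _.
  by apply: mulr_ge0; apply: normr_ge0.
- move=> v c Pv Qc.
  pose xs2 (i : 'I_(r + 1)) := match split i with inl a => xs (fr a) | inr _ => v end.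
  pose cs2 (i : 'I_(r + 1)) := match split i with inl a => cs (fc a) | inr _ => c end.
  have := H1 _ _ xs2 cs2.
  have /[swap]/[apply] : forall a, P (xs2 a) by move=> i; rewrite /xs2; case: split.
  have /[swap]/[apply] : forall b, Q (cs2 b) by move=> i; rewrite /cs2; case: split.
  rewrite -(submxK (pm h xs2 cs2)).
  have -> : ulsubmx (pm h xs2 cs2) = G.
    by apply/matrixP => a b; rewrite !mxE /xs2 /cs2 !split_l.
  move=> /(@schur _ _ _ _ _ _ Gu) /matrixP /(_ 0 0).
  rewrite !mxE /xs2 /cs2 !split_r => ->.
  apply: eq_bigr => a _; congr (_ * _); last by rewrite !mxE /xs2 /cs2 split_l split_r.
  rewrite !mxE; apply: eq_bigr => b _; by rewrite !mxE /xs2 /cs2 split_l split_r.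
Qed.

Lemma bridge (F : fieldType) (h : F -> F * F -> F) (P : set F) (Q : set (F * F)) (r : nat)
  (S : forall m p q : nat, ('I_m -> 'I_p -> 'I_q -> F) -> Prop) :
  (forall m p (xs : 'I_m -> F) (cs : 'I_p -> F * F), (0 < m)%N -> (0 < p)%N ->
     (forall a, P (xs a)) -> (forall b, Q (cs b)) ->
     exists G, S m p p G /\ forall a b, G a b b = h (xs a) (cs b)) ->
  (forall m p q G, S m p q G -> exists (xs : 'I_m -> F) (cs : 'I_(p * q) -> F * F),
     [/\ forall a, P (xs a), forall b, Q (cs b) &
         forall i j k, G i j k = h (xs i) (cs (mxvec_index j k))]) ->
  (forall m p q G, S m p q G -> (\rank (Umx G) <= r)%N) ->
  (forall b, (forall m p q G, S m p q G -> (\rank (Umx G) <= b)%N) -> (r <= b)%N) ->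
  (forall m p (xs : 'I_m -> F) (cs : 'I_p -> F * F),
     (forall a, P (xs a)) -> (forall b, Q (cs b)) -> (\rank (pm h xs cs) <= r)%N) /\
  (exists m p (xs : 'I_m -> F) (cs : 'I_p -> F * F),
     [/\ (forall a, P (xs a)), (forall b, Q (cs b)) & (r <= \rank (pm h xs cs))%N]).
Proof.
move=> Ha Hb Hc Hd; split.
  move=> m p xs cs Pxs Qcs.
  case: m xs Pxs => [|m] xs Pxs; first exact: leq_trans (rank_leq_row _) _.
  case: p cs Qcs => [|p] cs Qcs; first exact: leq_trans (rank_leq_col _) _.
  have [G [SG HG]] := Ha _ _ xs cs isT isT Pxs Qcs.
  have -> : pm h xs cs = \matrix_(a, b) G a b b.
    by apply/matrixP => a b; rewrite !mxE HG.
  exact: leq_trans (@Umx_diag _ _ _ G) (Hc _ _ _ _ SG).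
case: r Hc Hd => [|r] Hc Hd.
  exists 0%N, 0%N, (fun _ => 0), (fun _ => (0, 0)); split => //; by case.
apply: NNPP => Hn.
suff: (r.+1 <= r)%N by rewrite ltnn.
apply: Hd => m p q G SG.
have [xs [cs [Pxs Qcs HG]]] := Hb _ _ _ _ SG.
have -> : Umx G = pm h xs cs.
  by apply/matrixP => i c; case/mxvec_indexP: c => j k; rewrite UmxE HG mxE.
rewrite leqNgt; apply/negP => lt; apply: Hn.
by exists m, (p * q)%N, xs, cs; split.
Qed.

Theorem theorem2 (R : realType) :
  (* (i) *)
  (forall (Xf Yf Zf : set R) (f : R -> R -> R -> R) (r1 r2 r3 : nat),
     bounded3 f Xf Yf Zf ->
     Frank f Xf Yf Zf r1 r2 r3 ->
     exists (C : tensor R r1 r2 r3) (fx : R -> 'rV[R]_r1)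
            (fy : R -> 'rV[R]_r2) (fz : R -> 'rV[R]_r3),
       [/\ boundedv fx Xf, boundedv fy Yf, boundedv fz Zf &
           forall v1 v2 v3, Xf v1 -> Yf v2 -> Zf v3 ->
             f v1 v2 v3 = ttm3 C (fx v1) (fy v2) (fz v3)]) /\
  (* (ii) *)
  (forall (r1 r2 r3 : nat) (C : tensor R r1 r2 r3) (Xg Yg Zg : set R)
          (gx : R -> 'rV[R]_r1) (gy : R -> 'rV[R]_r2) (gz : R -> 'rV[R]_r3),
     boundedv gx Xg -> boundedv gy Yg -> boundedv gz Zg ->
     let g := fun v1 v2 v3 => ttm3 C (gx v1) (gy v2) (gz v3) in
     [/\ Frank_le g Xg Yg Zg 1 r1, Frank_le g Xg Yg Zg 2 r2 & Frank_le g Xg Yg Zg 3 r3]).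
Proof.
split.
  move=> X Y Z f r1 r2 r3 [M hM] [[le1 min1] [le2 min2] [le3 min3]].
  pose h1 := fun v (c : R * R) => f v c.1 c.2.
  pose Q1 := fun c : R * R => Y c.1 /\ Z c.2.
  pose S1 := fun m p q (G : 'I_m -> 'I_p -> 'I_q -> R) =>
    exists T : tensor R m p q, sampled f X Y Z T /\ G = T.
  have A1 : forall m p (xs : 'I_m -> R) (cs : 'I_p -> R * R), (0 < m)%N -> (0 < p)%N ->
     (forall a, X (xs a)) -> (forall b, Q1 (cs b)) ->
     exists G, S1 m p p G /\ forall a b, G a b b = h1 (xs a) (cs b).
    move=> m p xs cs m0 p0 Pxs Qcs.
    exists (fun i j k => f (xs i) (cs j).1 (cs k).2); split => //.
    exists (fun i j k => f (xs i) (cs j).1 (cs k).2); split => //; split => //.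
    exists xs, (fun j => (cs j).1), (fun k => (cs k).2); split => // j.
      exact: (Qcs j).1.
    exact: (Qcs j).2.
  have B1 : forall m p q G, S1 m p q G -> exists (xs : 'I_m -> R) (cs : 'I_(p * q) -> R * R),
     [/\ forall a, X (xs a), forall b, Q1 (cs b) &
         forall i j k, G i j k = h1 (xs i) (cs (mxvec_index j k))].
    move=> m p q G [T [[_ _ _ [x [y [z [Px Py Pz HT]]]]] ->]].
    exists x, (fun c => (y (dec c).1, z (dec c).2)); split => //.
      by move=> b; split; [apply: Py | apply: Pz].
    by move=> i j k; rewrite HT /h1 decE.
  have C1 : forall m p q G, S1 m p q G -> (\rank (Umx G) <= r1)%N.
    by move=> m p q G [T [sT ->]]; exact: (le1 _ _ _ T sT).
  have D1 : forall b, (forall m p q G, S1 m p q G -> (\rank (Umx G) <= b)%N) -> (r1 <= b)%N.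
    move=> b Hb; apply: min1 => n1 n2 n3 T sT.
    exact: (Hb _ _ _ T (ex_intro _ T (conj sT erefl))).
  have [H11 H12] := @bridge R h1 X Q1 r1 S1 A1 B1 C1 D1.
  have [xs1 [al [Pxs1 bal E1]]] : exists (xs : 'I_r1 -> R) (al : R -> 'rV[R]_r1),
    [/\ forall a, X (xs a), boundedv al X &
        forall v c, X v -> Q1 c -> h1 v c = \sum_a al v 0 a * h1 (xs a) c].
    apply: Lspan H11 H12; exists M => v c Pv [Qc1 Qc2]; exact: hM.
  pose h2 := fun v (c : R * R) => f c.1 v c.2.
  pose Q2 := fun c : R * R => X c.1 /\ Z c.2.
  pose S2 := fun m p q (G : 'I_m -> 'I_p -> 'I_q -> R) =>
    exists T : tensor R p m q, sampled f X Y Z T /\ G = (fun j i k => T i j k).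
  have A2 : forall m p (xs : 'I_m -> R) (cs : 'I_p -> R * R), (0 < m)%N -> (0 < p)%N ->
     (forall a, Y (xs a)) -> (forall b, Q2 (cs b)) ->
     exists G, S2 m p p G /\ forall a b, G a b b = h2 (xs a) (cs b).
    move=> m p xs cs m0 p0 Pxs Qcs.
    exists (fun j i k => f (cs i).1 (xs j) (cs k).2); split => //.
    exists (fun i j k => f (cs i).1 (xs j) (cs k).2); split => //; split => //.
    exists (fun j => (cs j).1), xs, (fun k => (cs k).2); split => // j.
      exact: (Qcs j).1.
    exact: (Qcs j).2.
  have B2 : forall m p q G, S2 m p q G -> exists (xs : 'I_m -> R) (cs : 'I_(p * q) -> R * R),
     [/\ forall a, Y (xs a), forall b, Q2 (cs b) &
         forall i j k, G i j k = h2 (xs i) (cs (mxvec_index j k))].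
    move=> m p q G [T [[_ _ _ [x [y [z [Px Py Pz HT]]]]] ->]].
    exists y, (fun c => (x (dec c).1, z (dec c).2)); split => //.
      by move=> b; split; [apply: Px | apply: Pz].
    by move=> i j k; rewrite HT /h2 decE.
  have C2 : forall m p q G, S2 m p q G -> (\rank (Umx G) <= r2)%N.
    by move=> m p q G [T [sT ->]]; exact: (le2 _ _ _ T sT).
  have D2 : forall b, (forall m p q G, S2 m p q G -> (\rank (Umx G) <= b)%N) -> (r2 <= b)%N.
    move=> b Hb; apply: min2 => n1 n2 n3 T sT.
    exact: (Hb _ _ _ (fun j i k => T i j k) (ex_intro _ T (conj sT erefl))).
  have [H21 H22] := @bridge R h2 Y Q2 r2 S2 A2 B2 C2 D2.
  have [xs2 [be [Pxs2 bbe E2]]] : exists (xs : 'I_r2 -> R) (al : R -> 'rV[R]_r2),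
    [/\ forall a, Y (xs a), boundedv al Y &
        forall v c, Y v -> Q2 c -> h2 v c = \sum_a al v 0 a * h2 (xs a) c].
    apply: Lspan H21 H22; exists M => v c Pv [Qc1 Qc2]; exact: hM.
  pose h3 := fun v (c : R * R) => f c.1 c.2 v.
  pose Q3 := fun c : R * R => X c.1 /\ Y c.2.
  pose S3 := fun m p q (G : 'I_m -> 'I_p -> 'I_q -> R) =>
    exists T : tensor R p q m, sampled f X Y Z T /\ G = (fun k i j => T i j k).
  have A3 : forall m p (xs : 'I_m -> R) (cs : 'I_p -> R * R), (0 < m)%N -> (0 < p)%N ->
     (forall a, Z (xs a)) -> (forall b, Q3 (cs b)) ->
     exists G, S3 m p p G /\ forall a b, G a b b = h3 (xs a) (cs b).
    move=> m p xs cs m0 p0 Pxs Qcs.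
    exists (fun k i j => f (cs i).1 (cs j).2 (xs k)); split => //.
    exists (fun i j k => f (cs i).1 (cs j).2 (xs k)); split => //; split => //.
    exists (fun j => (cs j).1), (fun k => (cs k).2), xs; split => // j.
      exact: (Qcs j).1.
    exact: (Qcs j).2.
  have B3 : forall m p q G, S3 m p q G -> exists (xs : 'I_m -> R) (cs : 'I_(p * q) -> R * R),
     [/\ forall a, Z (xs a), forall b, Q3 (cs b) &
         forall i j k, G i j k = h3 (xs i) (cs (mxvec_index j k))].
    move=> m p q G [T [[_ _ _ [x [y [z [Px Py Pz HT]]]]] ->]].
    exists z, (fun c => (x (dec c).1, y (dec c).2)); split => //.
      by move=> b; split; [apply: Px | apply: Py].
    by move=> i j k; rewrite HT /h3 decE.
  have C3 : forall m p q G, S3 m p q G -> (\rank (Umx G) <= r3)%N.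
    by move=> m p q G [T [sT ->]]; exact: (le3 _ _ _ T sT).
  have D3 : forall b, (forall m p q G, S3 m p q G -> (\rank (Umx G) <= b)%N) -> (r3 <= b)%N.
    move=> b Hb; apply: min3 => n1 n2 n3 T sT.
    exact: (Hb _ _ _ (fun k i j => T i j k) (ex_intro _ T (conj sT erefl))).
  have [H31 H32] := @bridge R h3 Z Q3 r3 S3 A3 B3 C3 D3.
  have [xs3 [ga [Pxs3 bga E3]]] : exists (xs : 'I_r3 -> R) (al : R -> 'rV[R]_r3),
    [/\ forall a, Z (xs a), boundedv al Z &
        forall v c, Z v -> Q3 c -> h3 v c = \sum_a al v 0 a * h3 (xs a) c].
    apply: Lspan H31 H32; exists M => v c Pv [Qc1 Qc2]; exact: hM.
  exists (fun a b c => f (xs1 a) (xs2 b) (xs3 c)), al, be, ga; split => //.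
  move=> v1 v2 v3 Xv1 Yv2 Zv3.
  have e1 := E1 v1 (v2, v3) Xv1 (conj Yv2 Zv3); rewrite /h1 /= in e1; rewrite e1.
  rewrite /ttm3; apply: eq_bigr => a _.
  have e2 := E2 v2 (xs1 a, v3) Yv2 (conj (Pxs1 a) Zv3); rewrite /h2 /= in e2.
  rewrite e2 mulr_sumr; apply: eq_bigr => b _.
  have e3 := E3 v3 (xs1 a, xs2 b) Zv3 (conj (Pxs1 a) (Pxs2 b)); rewrite /h3 /= in e3.
  rewrite e3 !mulr_sumr; apply: eq_bigr => c _; ring.
move=> r1 r2 r3 C X Y Z gx gy gz _ _ _ g; split.
- move=> n1 n2 n3 T [_ _ _ [x [y [z [_ _ _ HT]]]]].
  change (\rank (Umx T) <= r1)%N.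
  rewrite (@Umx_fact _ _ _ _ _ T (\matrix_(i, a) gx (x i) 0 a)
    (fun a j k => \sum_b \sum_c C a b c * gy (y j) 0 b * gz (z k) 0 c)).
    exact: leq_trans (mxrankM_maxl _ _) (rank_leq_col _).
  move=> i j k; rewrite HT /g /ttm3; apply: eq_bigr => a _.
  rewrite mxE mulr_sumr; apply: eq_bigr => b _.
  rewrite mulr_sumr; apply: eq_bigr => c _; ring.
- move=> n1 n2 n3 T [_ _ _ [x [y [z [_ _ _ HT]]]]].
  change (\rank (Umx (fun j i k => T i j k)) <= r2)%N.
  rewrite (@Umx_fact _ _ _ _ _ (fun j i k => T i j k) (\matrix_(j, b) gy (y j) 0 b)
    (fun b i k => \sum_a \sum_c C a b c * gx (x i) 0 a * gz (z k) 0 c)).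
    exact: leq_trans (mxrankM_maxl _ _) (rank_leq_col _).
  move=> j i k; rewrite HT /g /ttm3 exchange_big /=; apply: eq_bigr => b _.
  rewrite mxE mulr_sumr; apply: eq_bigr => a _.
  rewrite mulr_sumr; apply: eq_bigr => c _; ring.
- move=> n1 n2 n3 T [_ _ _ [x [y [z [_ _ _ HT]]]]].
  change (\rank (Umx (fun k i j => T i j k)) <= r3)%N.
  rewrite (@Umx_fact _ _ _ _ _ (fun k i j => T i j k) (\matrix_(k, c) gz (z k) 0 c)
    (fun c i j => \sum_a \sum_b C a b c * gx (x i) 0 a * gy (y j) 0 b)).
    exact: leq_trans (mxrankM_maxl _ _) (rank_leq_col _).
  move=> k i j; rewrite HT /g /ttm3.
  under eq_bigr => a _ do rewrite exchange_big /=.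
  rewrite exchange_big /=; apply: eq_bigr => c _.
  rewrite mxE mulr_sumr; apply: eq_bigr => a _.
  rewrite mulr_sumr; apply: eq_bigr => b _; ring.
Qed.
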